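(* Let $f:[0,\infty)\to\mathbb R$ be convex and non-increasing, and let $g:[0,\infty)\to\mathbb R\cup\{+\infty\}$ be convex and non-increasing. Define $w(x,y)=g\big(\sqrt{(x-y)^2+(f(x)-f(y))^2}\big)$ for $x,y\ge0$. Then for all $0\le x_1\le x_2\le x_3\le x_4$, $w(x_1,x_3)+w(x_2,x_4)=\min\{w(x_{\sigma(1)},x_{\sigma(2)})+w(x_{\sigma(3)},x_{\sigma(4)}):\sigma\text{ a permutation of }\{1,2,3,4\}\},$ i.e. $w$ is well-ordering on $[0,\infty)$.
   Context: Well-ordering on a set $J\subset\mathbb R$ means exactly the displayed identity for all $x_1\le x_2\le x_3\le x_4$ in $J$ (for a symmetric continuous interaction). *)

(* Defs.v *)
From HB Require Import structures.
From mathcomp Require Import all_boot all_order all_algebra all_fingroup.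
From mathcomp Require Import all_classical all_reals ereal.
Set Implicit Arguments. Unset Strict Implicit. Unset Printing Implicit Defensive.
Import Order.TTheory GRing.Theory Num.Theory.
Local Open Scope ring_scope.
Local Open Scope ereal_scope.

Definition convex_on_nonneg {R : realType} (f : R -> R) : Prop :=
  forall (x y t : R), (0 <= x)%R -> (0 <= y)%R -> (0 < t < 1)%R ->
    (f (t * x + (1 - t) * y) <= t * f x + (1 - t) * f y)%R.

Definition nonincreasing_on_nonneg {R : realType} (f : R -> R) : Prop :=
  forall (x y : R), (0 <= x)%R -> (x <= y)%R -> (f y <= f x)%R.

(* g : [0,oo) -> R u {+oo} convex, with the usual convention of extended
   arithmetic (no -oo values are involved). *)
Definition econvex_on_nonneg {R : realType} (g : R -> \bar R) : Prop :=
  forall (x y t : R), (0 <= x)%R -> (0 <= y)%R -> (0 < t < 1)%R ->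
    g (t * x + (1 - t) * y)%R <= t%:E * g x + (1 - t)%:E * g y.

Definition enonincreasing_on_nonneg {R : realType} (g : R -> \bar R) : Prop :=
  forall (x y : R), (0 <= x)%R -> (x <= y)%R -> g y <= g x.

Definition wfg {R : realType} (f : R -> R) (g : R -> \bar R) (x y : R) : \bar R :=
  g (Num.sqrt ((x - y) ^+ 2 + (f x - f y) ^+ 2))%R.

(* the point x_{i+1}, for i : 'I_4 (0-based indexing of x_1..x_4) *)
Definition pt4 {R : realType} (x1 x2 x3 x4 : R) (i : 'I_4) : R :=
  nth 0%R [:: x1; x2; x3; x4] i.

Definition min_pairing {R : realType} (w : R -> R -> \bar R) (x1 x2 x3 x4 : R)
  : \bar R :=
  \big[Order.min/+oo]_(s : 'S_4)
    (w (pt4 x1 x2 x3 x4 (s (inord 0))) (pt4 x1 x2 x3 x4 (s (inord 1)))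
     + w (pt4 x1 x2 x3 x4 (s (inord 2))) (pt4 x1 x2 x3 x4 (s (inord 3)))).

(* Main.v *)
Require Import Defs.
From HB Require Import structures.
From mathcomp Require Import all_boot all_order all_algebra all_fingroup.
From mathcomp Require Import all_classical all_reals ereal.
From mathcomp Require Import lra ring.
Import Order.TTheory GRing.Theory Num.Theory.
Local Open Scope ring_scope.
Definition NN {R : realType} (a b : R) : R := Num.sqrt (a ^+ 2 + b ^+ 2).

Lemma NN_ge0 {R : realType} (a b : R) : 0 <= NN a b.
Proof. exact: sqrtr_ge0. Qed.

Lemma NN_sq {R : realType} (a b : R) : NN a b ^+ 2 = a ^+ 2 + b ^+ 2.
Proof. by rewrite /NN sqr_sqrtr // addr_ge0 // sqr_ge0. Qed.

Lemma NN_scale {R : realType} (k a b : R) : 0 <= k -> NN (k * a) (k * b) = k * NN a b.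
Proof.
move=> hk; rewrite /NN !exprMn -mulrDr sqrtrM ?sqr_ge0 // sqrtr_sqr ger0_norm //.
Qed.

Lemma le_sqrt_sq {R : realType} (z w : R) : 0 <= w -> z <= w ^+ 2 -> Num.sqrt z <= w.
Proof.
move=> hw hz; rewrite -(ger0_norm hw) -sqrtr_sqr ler_wsqrtr //.
Qed.

Lemma NN_tri {R : realType} (a b c d : R) : NN (a + c) (b + d) <= NN a b + NN c d.
Proof.
have h1 := NN_ge0 a b; have h2 := NN_ge0 c d.
have s1 := NN_sq a b; have s2 := NN_sq c d.
have cs : a * c + b * d <= NN a b * NN c d.
  have [hn|hp] := lerP (a * c + b * d) 0.
    by apply: le_trans hn _; apply: mulr_ge0.
  have hsq : (a * c + b * d) ^+ 2 <= (NN a b * NN c d) ^+ 2.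
    have -> : (NN a b * NN c d) ^+ 2 = NN a b ^+ 2 * NN c d ^+ 2 by rewrite exprMn.
    rewrite s1 s2.
    have : 0 <= (a * d - b * c) ^+ 2 by apply: sqr_ge0.
    move=> h; rewrite -subr_ge0; apply: le_trans h _; rewrite le_eqVlt; apply/orP; left; apply/eqP; ring.
  have hp2 : 0 <= NN a b * NN c d by apply: mulr_ge0.
  nra.
apply: le_sqrt_sq; first by apply: addr_ge0.
nra.
Qed.

Lemma NN_mono {R : realType} (a b c d : R) : a ^+ 2 <= c ^+ 2 -> b ^+ 2 <= d ^+ 2 -> NN a b <= NN c d.
Proof. move=> h1 h2; rewrite /NN ler_wsqrtr //; exact: lerD. Qed.

Lemma chord {R : realType} (f : R -> R) (a b c : R) : convex_on_nonneg f ->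
  0 <= a -> a <= b -> b <= c -> a < c -> f b <= f a + (b - a) / (c - a) * (f c - f a).
Proof.
move=> hf ha hab hbc hac.
have hca : c - a != 0 by rewrite subr_eq0 gt_eqF.
have [eab|nab] := eqVneq b a.
  by rewrite eab subrr mul0r mul0r addr0.
have [ebc|nbc] := eqVneq b c.
  rewrite ebc divff // mul1r; lra.
have hab' : a < b by rewrite lt_neqAle eq_sym nab.
have hbc' : b < c by rewrite lt_neqAle nbc.
have ht : 0 < (c - b) / (c - a) < 1.
  apply/andP; split; first by apply: divr_gt0; lra.
  by rewrite ltr_pdivrMr; lra.
have := hf a c _ ha (le_trans (le_trans ha hab) hbc) ht.
have -> : (c - b) / (c - a) * a + (1 - (c - b) / (c - a)) * c = b by field.
have -> : (c - b) / (c - a) * f a + (1 - (c - b) / (c - a)) * f c =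
  f a + (b - a) / (c - a) * (f c - f a) by field.
done.
Qed.

Lemma cross {R : realType} (f : R -> R) (x1 x2 x3 x4 : R) : convex_on_nonneg f ->
  0 <= x1 -> x1 <= x2 -> x2 <= x3 -> x3 <= x4 ->
  exists t u, [/\ 0 <= t <= 1, 0 <= u <= 1, x1 + t * (x3 - x1) = x2 + u * (x4 - x2)
     & f x1 + t * (f x3 - f x1) = f x2 + u * (f x4 - f x2)].
Proof.
move=> hf h1 h12 h23 h34.
have [e13|n13] := eqVneq x1 x3.
  have e12 : x1 = x2 by apply: le_anti; rewrite h12 e13 h23.
  exists 0, 0; rewrite !mul0r !addr0 e12; split => //; lra.
have [e24|n24] := eqVneq x2 x4.
  have e34 : x3 = x4 by apply: le_anti; rewrite h34 -e24 h23.
  exists 1, 1; rewrite !mul1r e34; split; lra.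
have l13 : x1 < x3 by rewrite lt_neqAle n13 (le_trans h12 h23).
have l24 : x2 < x4 by rewrite lt_neqAle n24 (le_trans h23 h34).
set A := x3 - x1. set B := x4 - x2.
have hA : 0 < A by rewrite /A; lra.
have hB : 0 < B by rewrite /B; lra.
have nA : A != 0 by rewrite gt_eqF.
have nB : B != 0 by rewrite gt_eqF.
set al := f x1 - f x2 - (x1 - x2) / B * (f x4 - f x2).
set be := (f x3 - f x1) - A / B * (f x4 - f x2).
set t0 := (x2 - x1) / A.
have ht0 : 0 <= t0 <= 1.
  apply/andP; split; first by apply: divr_ge0; rewrite /A; lra.
  by rewrite ler_pdivrMr // /A; lra.
have t0A : t0 * A = x2 - x1 by rewrite /t0 mulrAC -mulrA divff // mulr1.
set e0 := al + be * t0. set e1 := al + be.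
have he0 : 0 <= e0.
  have -> : e0 = f x1 + t0 * (f x3 - f x1) - f x2.
    by rewrite /e0 /al /be /t0; field; rewrite nA nB.
  have := @chord _ f _ _ _ hf h1 h12 h23 l13. rewrite -/A -/t0; lra.
have he1 : e1 <= 0.
  have -> : e1 = f x3 - f x2 - (x3 - x2) / B * (f x4 - f x2).
    by rewrite /e1 /al /be /A; field; rewrite nB.
  have := @chord _ f _ _ _ hf (le_trans h1 h12) h23 h34 l24. rewrite -/B; lra.
pose uf (t : R) := (x1 - x2 + t * A) / B.
suff : exists t, [/\ t0 <= t, t <= 1 & al + be * t = 0].
  move=> [t [ht1 ht2 ht3]].
  exists t, (uf t); split.
  - apply/andP; split; last by []. move/andP: ht0 => [ ? ?]; lra.
  - apply/andP; split.
      rewrite /uf; apply: divr_ge0; last by lra.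
      have : t0 * A <= t * A by rewrite ler_pM2r.
      lra.
    rewrite /uf ler_pdivrMr // mul1r.
    have : t * A <= 1 * A by rewrite ler_pM2r.
    rewrite /A /B; lra.
  - rewrite /uf; field; exact: nB.
  - apply/eqP; rewrite -subr_eq0; apply/eqP; rewrite -ht3 /uf /al /be; field; exact: nB.
have [e0z|e0p] := eqVneq e0 0.
  exists t0; split => //; by move/andP: ht0 => [].
have pe0 : 0 < e0 by rewrite lt_neqAle eq_sym e0p he0.
have d0 : 0 < e0 - e1 by lra.
set la := e0 / (e0 - e1).
have hla : 0 <= la <= 1.
  apply/andP; split; first by apply: divr_ge0; lra.
  by rewrite ler_pdivrMr //; lra.
have beq : be * (1 - t0) = e1 - e0 by rewrite /e1 /e0; ring.
exists (t0 + (1 - t0) * la); split.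
- move/andP: hla => [? ?]; move/andP: ht0 => [? ?]; nra.
- move/andP: hla => [? ?]; move/andP: ht0 => [? ?]; nra.
- have -> : al + be * (t0 + (1 - t0) * la) = e0 + be * (1 - t0) * la by rewrite /e0; ring.
  rewrite beq /la; field; by rewrite gt_eqF.
Qed.


Definition Df {R : realType} (f : R -> R) (x y : R) : R :=
  Num.sqrt ((x - y) ^+ 2 + (f x - f y) ^+ 2).

Lemma Df_NN {R : realType} (f : R -> R) x y : Df f x y = NN (y - x) (f y - f x).
Proof. rewrite /Df /NN; congr Num.sqrt; ring. Qed.

Lemma Df_ge0 {R : realType} (f : R -> R) x y : 0 <= Df f x y.
Proof. exact: sqrtr_ge0. Qed.

Lemma Dmono {R : realType} (f : R -> R) x y z : nonincreasing_on_nonneg f ->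
  0 <= x -> x <= y -> y <= z -> Df f x y <= Df f x z /\ Df f y z <= Df f x z.
Proof.
move=> hf hx hxy hyz.
have fxy := hf x y hx hxy. have fyz := hf y z (le_trans hx hxy) hyz.
rewrite !Df_NN; split; apply: NN_mono; nra.
Qed.

Lemma quad {R : realType} (f : R -> R) x1 x2 x3 x4 : convex_on_nonneg f ->
  0 <= x1 -> x1 <= x2 -> x2 <= x3 -> x3 <= x4 ->
  Df f x1 x4 + Df f x2 x3 <= Df f x1 x3 + Df f x2 x4.
Proof.
move=> hf h1 h12 h23 h34.
have [t [u [ht hu E1 E2]]] := @cross _ f _ _ _ _ hf h1 h12 h23 h34.
move/andP: ht => [ht0 ht1]; move/andP: hu => [hu0 hu1].
rewrite !Df_NN.
have e14 : x4 - x1 = t * (x3 - x1) + (1 - u) * (x4 - x2) by lra.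
have f14 : f x4 - f x1 = t * (f x3 - f x1) + (1 - u) * (f x4 - f x2) by lra.
have e23 : x3 - x2 = (1 - t) * (x3 - x1) + u * (x4 - x2) by lra.
have f23 : f x3 - f x2 = (1 - t) * (f x3 - f x1) + u * (f x4 - f x2) by lra.
rewrite e14 f14 e23 f23.
apply: le_trans (lerD (NN_tri _ _ _ _) (NN_tri _ _ _ _)) _.
rewrite !NN_scale; try lra.
Qed.

Local Open Scope ereal_scope.

Lemma gmaj {R : realType} (g : R -> \bar R) (a b c d : R) :
  (forall x : R, (0 <= x)%R -> g x != -oo) ->
  econvex_on_nonneg g -> enonincreasing_on_nonneg g ->
  (0 <= a)%R -> (a <= b)%R -> (b <= d)%R -> (a <= c)%R -> (a + d <= b + c)%R ->
  g b + g c <= g a + g d.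
Proof.
move=> hninf hconv hmon ha hab hbd hac had.
set c' := (a + d - b)%R.
have hc'c : (c' <= c)%R by rewrite /c'; lra.
have hac' : (a <= c')%R by rewrite /c'; lra.
have h0c' : (0 <= c')%R by lra.
apply: le_trans (leeD (lexx (g b)) (hmon c' c h0c' hc'c)) _.
have [eab|nab] := eqVneq b a.
  have -> : c' = d by rewrite /c' eab; lra.
  by rewrite eab.
have [ebd|nbd] := eqVneq b d.
  have -> : c' = a by rewrite /c' ebd; lra.
  by rewrite ebd addeC.
have lab : (a < b)%R by rewrite lt_neqAle eq_sym nab.
have lbd : (b < d)%R by rewrite lt_neqAle nbd.
have nda : (d - a != 0)%R by rewrite subr_eq0 gt_eqF //; lra.
set la := ((d - b) / (d - a))%R.
have hla : (0 < la < 1)%R.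
  apply/andP; split; first by apply: divr_gt0; lra.
  by rewrite ltr_pdivrMr; lra.
have hla' : (0 < 1 - la < 1)%R by move/andP: hla => [? ?]; apply/andP; split; lra.
have hd : (0 <= d)%R by lra.
have c1 := hconv a d la ha hd hla.
have c2 := hconv a d (1 - la)%R ha hd hla'.
have eb : (la * a + (1 - la) * d)%R = b by rewrite /la; field.
rewrite eb in c1.
have ec : ((1 - la) * a + (1 - (1 - la)) * d)%R = c' by rewrite /c' /la; field.
rewrite ec in c2.
apply: le_trans (leeD c1 c2) _.
case ga: (g a) => [ra| |]; last by move: (hninf a ha); rewrite ga.
  case gd: (g d) => [rd| |]; last by move: (hninf d hd); rewrite gd.
    rewrite -!EFinM -!EFinD lee_fin; lra.
  by rewrite addey ?leey.
by rewrite addye ?leey // hninf.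
Qed.

Lemma pairs_ge {R : realType} (V : \bar R) (W : nat -> nat -> \bar R) :
  (forall i j, W i j = W j i) ->
  V <= W 0%N 1%N + W 2%N 3%N -> V <= W 0%N 3%N + W 1%N 2%N -> V <= W 0%N 2%N + W 1%N 3%N ->
  forall i j k l : nat, (i < 4)%N -> (j < 4)%N -> (k < 4)%N -> (l < 4)%N ->
  i != j -> i != k -> i != l -> j != k -> j != l -> k != l ->
  V <= W i j + W k l.
Proof.
move=> Ws h1 h2 h3 i j k l.
case: i => [|[|[|[|i]]]] //; case: j => [|[|[|[|j]]]] //;
case: k => [|[|[|[|k]]]] //; case: l => [|[|[|[|l]]]] // => _ _ _ _ *;
by rewrite ?[W 1%N 0%N]Ws ?[W 2%N 0%N]Ws ?[W 3%N 0%N]Ws ?[W 2%N 1%N]Ws ?[W 3%N 1%N]Ws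
   ?[W 3%N 2%N]Ws ?[W _ _ + W 0%N _]addeC.
Qed.

Lemma dist4 (s : 'S_4) (a b : nat) : (a < 4)%N -> (b < 4)%N -> a != b ->
  (nat_of_ord (s (inord a))) != s (inord b).
Proof.
move=> ha hb hab; rewrite (inj_eq val_inj) (inj_eq perm_inj) -(inj_eq val_inj) /=.
by rewrite !inordK.
Qed.

Lemma inord_eq4 (a b : nat) : (a < 4)%N -> (b < 4)%N -> (inord a == inord b :> 'I_4) = (a == b).
Proof. by move=> ha hb; rewrite -(inj_eq val_inj) /= !inordK. Qed.

Lemma tp_ex {R : realType} (w : R -> R -> \bar R) x1 x2 x3 x4 :
  min_pairing w x1 x2 x3 x4 <= w x1 x3 + w x2 x4.
Proof.
rewrite /min_pairing.
apply: le_trans (bigmin_le _ (tperm (inord 1) (inord 2)) _) _.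
rewrite !permE /= /pt4 !inord_eq4 //= !inordK //.
Qed.

Local Open Scope ereal_scope.

Theorem mainTheorem19 (R : realType) (f : R -> R) (g : R -> \bar R) :
  (forall x : R, (0 <= x)%R -> g x != -oo) ->
  convex_on_nonneg f -> nonincreasing_on_nonneg f ->
  econvex_on_nonneg g -> enonincreasing_on_nonneg g ->
  forall x1 x2 x3 x4 : R,
    (0 <= x1)%R -> (x1 <= x2)%R -> (x2 <= x3)%R -> (x3 <= x4)%R ->
    wfg f g x1 x3 + wfg f g x2 x4 = min_pairing (wfg f g) x1 x2 x3 x4.
Proof.
move=> hninf hfc hfm hgc hgm x1 x2 x3 x4 h1 h12 h23 h34.
have wD : forall x y, wfg f g x y = g (Df f x y) by [].
have wC : forall x y, wfg f g x y = wfg f g y x.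
  by move=> x y; rewrite /wfg; congr (g (Num.sqrt _)); ring.
have [d12 d23] := @Dmono _ f _ _ _ hfm h1 h12 h23.
have [d13 d34] := @Dmono _ f _ _ _ hfm h1 (le_trans h12 h23) h34.
have [d23' d34'] := @Dmono _ f _ _ _ hfm (le_trans h1 h12) h23 h34.
have D0 : forall x y, (0 <= Df f x y)%R by move=> x y; apply: sqrtr_ge0.
have hA : wfg f g x1 x3 + wfg f g x2 x4 <= wfg f g x1 x2 + wfg f g x3 x4.
  rewrite !wD; apply: leeD; apply: hgm => //.
have hB : wfg f g x1 x3 + wfg f g x2 x4 <= wfg f g x1 x4 + wfg f g x2 x3.
  rewrite !wD [X in _ <= X]addeC; apply: gmaj => //.
  have := @quad _ f _ _ _ _ hfc h1 h12 h23 h34; lra.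
apply/le_anti/andP; split; last exact: tp_ex.
apply/bigmin_geP; split; first exact: leey.
move=> s _.
pose W (i j : nat) := wfg f g (nth 0%R [:: x1; x2; x3; x4] i) (nth 0%R [:: x1; x2; x3; x4] j).
have Ws : forall i j, W i j = W j i by move=> i j; rewrite /W wC.
have L := fun k : nat => ltn_ord (s (inord k)).
have H := (@pairs_ge _ _ W Ws hA hB (lexx _) _ _ _ _ (L 0%N) (L 1%N) (L 2%N) (L 3%N)
  (dist4 s 0 1 isT isT isT) (dist4 s 0 2 isT isT isT)
  (dist4 s 0 3 isT isT isT) (dist4 s 1 2 isT isT isT)
  (dist4 s 1 3 isT isT isT) (dist4 s 2 3 isT isT isT)).
exact H.
Qed.
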